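(* The steady-state download time in the FJ-SM system stochastically dominates those in the FJ-FA and FJ-GA systems (all with the same arrival rate, storage code and service model): for all $x\ge 0$, $\Pr\{T_{\text{FJ-GA}} > x\} \le \Pr\{T_{\text{FJ-SM}} > x\}$ and $\Pr\{T_{\text{FJ-FA}} > x\} \le \Pr\{T_{\text{FJ-SM}} > x\}$.
   Context: Storage model: $k$ objects $f_1,\dots,f_k$ are encoded by a systematic $(n,k)$ linear code on $n$ servers with $(r,t)$-availability: for each systematic server $i$ there are $t$ pairwise disjoint recovery groups of $r$ servers from any one of which $f_i$ can be recovered. Requests arrive as a Poisson process of rate $\lambda$. Fork-Join access: a request for $f_i$ is replicated into one copy at systematic server $i$ and one at each of its $t$ recovery groups; a recovery-group copy is forked into $r$ sub-copies (one per server of the group) and completes when all finish; the request completes when its systematic copy finishes or some recovery-group copy completes, and all its outstanding copies/sub-copies are then removed immediately. Each server has a FCFS queue; service times are independent, each $\mathrm{Exp}(\mu)$. FJ-GA: each request independently asks for $f_i$ with probability $p_i$. FJ-FA: every request asks for the same object. FJ-SM: requests wait in a centralized FCFS queue and the request at its head is admitted to the servers (and served by the Fork-Join scheme) only when all servers are idle. Download time is departure minus arrival time, in steady state; the systems are assumed stable. *)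

(* Defs.v *)
From HB Require Import structures.
From mathcomp Require Import all_boot all_order all_algebra.
From mathcomp Require Import all_classical all_reals all_analysis.
Set Implicit Arguments. Unset Strict Implicit. Unset Printing Implicit Defensive.
Import Order.TTheory GRing.Theory Num.Theory.
Local Open Scope classical_set_scope.
Local Open Scope ring_scope.

Definition mutually_independent {d} {T : measurableType d} {R : realType}
  (P : probability T R) {I : eqType} (Y : I -> T -> R) : Prop :=
  forall (J : seq I) (B : I -> set R), uniq J -> (forall i, measurable (B i)) ->
    P (\bigcap_(i in [set` J]) (Y i @^-1` B i))
    = (\prod_(i <- J) fine (P (Y i @^-1` B i)))%:E.

(* Storage model: systematic (n,k) linear code over a field F with          *)
(* generator matrix G (server s stores sum_l f_l * G l s), with (r,t)-      *)
(* availability: for each systematic server i (= server i, i < k) there     *)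
(* are t pairwise disjoint recovery groups grp i g of r servers, not         *)
(* containing i, from each of which f_i is a linear combination.            *)
Definition systematic_rt_available (F : fieldType) (n k t r : nat)
  (hkn : (k <= n)%N) (G : 'M[F]_(k, n)) (grp : 'I_k -> 'I_t -> {set 'I_n}) : Prop :=
  (forall i l : 'I_k, G l (widen_ord hkn i) = (l == i)%:R) /\
  (forall i : 'I_k,
     (forall g, #|grp i g| = r) /\
     (forall g1 g2, g1 != g2 -> (grp i g1 :&: grp i g2 = finset.set0)%SET) /\
     (forall g, widen_ord hkn i \notin grp i g) /\
     (forall g, exists a : 'I_n -> F,
        forall l : 'I_k, \sum_(s in grp i g) a s * G l s = (l == i)%:R)).

(* Sample-path dynamics of Fork-Join access with FCFS server queues.       *)
(* One request: arrival time a, systematic server si, recovery groups grp, *)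
(* service time S s of its (sub-)copy at server s, and free s = time at     *)
(* which server s has finished with (or discarded) all copies of earlier    *)
(* requests.  Returns (departure time, updated free times).  Because        *)
(* service is exponential (memoryless), drawing one service time per        *)
(* (request, server) is the same model as drawing it when the copy starts. *)
Definition fj_step {R : realType} (n t : nat) (si : 'I_n)
  (grp : 'I_t -> {set 'I_n}) (a : R) (S : 'I_n -> R) (free : 'I_n -> R)
  : R * ('I_n -> R) :=
  let start s := Num.max a (free s) in
  let C s := start s + S s in
  let D := Num.min (C si)
             (\big[Num.min/C si]_(g < t) \big[Num.max/a]_(s in grp g) C s) in
  (D, fun s => if (s == si) || [exists g, s \in grp g] then
                 (if D <= start s then free s   (* copy removed before start *)
                  else Num.min (C s) D)          (* finished, or removed at D *)
               else free s).

Section Systems.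
Context {R : realType} (n k t : nat) (hkn : (k <= n)%N)
  (grp : 'I_k -> 'I_t -> {set 'I_n})
  (A : nat -> R)            (* arrival time of request j *)
  (file : nat -> 'I_k)      (* object requested by request j *)
  (S : nat -> 'I_n -> R).   (* service time of request j's copy at server s *)

Definition req_step (j : nat) (free : 'I_n -> R) :=
  fj_step (widen_ord hkn (file j)) (grp (file j)) (A j) (S j) free.

(* free times of servers after requests 0..j-1 (system initially empty) *)
Fixpoint fj_free (j : nat) : 'I_n -> R :=
  match j with
  | 0 => fun _ => 0
  | j'.+1 => (req_step j' (fj_free j')).2
  end.

(* departure time of request j under FCFS Fork-Join (FJ-GA / FJ-FA) *)
Definition fj_departure (j : nat) : R := (req_step j (fj_free j)).1.

(* FJ-SM: centralized FCFS queue; head request admitted when all servers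
   are idle, i.e. at max(arrival, previous departure). *)
Fixpoint sm_departure (j : nat) : R :=
  let prev := match j with 0 => 0 | j'.+1 => sm_departure j' end in
  let st := Num.max (A j) prev in
  (fj_step (widen_ord hkn (file j)) (grp (file j)) st (S j) (fun _ => st)).1.
End Systems.

Definition arrivals {T} {R : realType} (X : nat -> T -> R) (w : T) (j : nat) : R :=
  \sum_(l < j.+1) X l w.

Definition prim_idx (n : nat) : eqType := (nat + nat * 'I_n + nat)%type.
Definition prim_rv {T} {R : realType} (n k : nat) (X : nat -> T -> R)
  (Sv : nat -> 'I_n -> T -> R) (Ch : nat -> T -> 'I_k) (i : prim_idx n) : T -> R :=
  match i with
  | inl (inl j) => X j
  | inl (inr (j, s)) => Sv j s
  | inr j => fun w => (nat_of_ord (Ch j w))%:R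
  end.

(* Main.v *)
Require Import Defs.
From HB Require Import structures.
From mathcomp Require Import all_boot all_order all_algebra.
From mathcomp Require Import all_classical all_reals all_analysis.
From mathcomp Require Import measurable_realfun.
Import Order.TTheory GRing.Theory Num.Theory numFieldNormedType.Exports.
Local Open Scope classical_set_scope.
Local Open Scope ring_scope.

Section Meas.
Context {d : measure_display} {T : measurableType d} {R : realType}.
Notation mf f := (measurable_fun [set: T] (f : T -> R)).

Lemma mmin (f g : T -> R) : mf f -> mf g -> mf (fun w => Num.min (f w) (g w)).
Proof. exact: measurable_minr. Qed.
Lemma mmax (f g : T -> R) : mf f -> mf g -> mf (fun w => Num.max (f w) (g w)).
Proof. exact: measurable_maxr. Qed.
Lemma madd (f g : T -> R) : mf f -> mf g -> mf (fun w => f w + g w).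
Proof. exact: measurable_funD. Qed.

Lemma mbig (I : Type) (r : seq I) (Pr : pred I) (op : R -> R -> R)
  (hop : forall f g : T -> R, mf f -> mf g -> mf (fun w => op (f w) (g w)))
  (idx : T -> R) (F : I -> T -> R) :
  mf idx -> (forall i, mf (F i)) -> mf (fun w => \big[op/idx w]_(i <- r | Pr i) F i w).
Proof.
move=> hi hF; elim: r => [|i r IH].
  by under eq_fun do rewrite big_nil.
under eq_fun do rewrite big_cons.
by case: (Pr i) => //; apply: hop.
Qed.

Lemma mchoice (k : nat) (c : T -> 'I_k) (H : 'I_k -> T -> R) :
  (forall i, measurable [set w | c w = i]) -> (forall i, mf (H i)) ->
  mf (fun w => H (c w) w).
Proof.
move=> mc mH _ B mB; rewrite setTI.
have key : forall l : seq 'I_k,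
    measurable [set w | c w \in l /\ B (H (c w) w)].
  elim=> [|i l IH].
    by rewrite (_ : [set w | _] = set0) //; apply/seteqP; split => w //= [].
  have -> : [set w | c w \in i :: l /\ B (H (c w) w)] =
      ([set w | c w = i] `&` (H i @^-1` B)) `|` [set w | c w \in l /\ B (H (c w) w)].
    apply/seteqP; split => w /=.
      rewrite in_cons => -[/orP[/eqP ->|hl] hB]; first by left.
      by right.
    move=> [[-> hB]|[hl hB]]; split => //; first by rewrite in_cons eqxx.
    by rewrite in_cons hl orbT.
  apply: measurableU => //; apply: measurableI => //.
  by have := mH i measurableT B mB; rewrite setTI.
have := key (enum 'I_k).
by rewrite (_ : [set w | _] = (fun w => H (c w) w) @^-1` B) //;
  apply/seteqP; split => w /=; [case | split => //; rewrite mem_enum].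
Qed.

Context (n t : nat).

Lemma mstep1 (si : 'I_n) (g' : 'I_t -> {set 'I_n}) (a : T -> R) (S free : 'I_n -> T -> R) :
  mf a -> (forall s, mf (S s)) -> (forall s, mf (free s)) ->
  mf (fun w => (fj_step si g' (a w) (S^~ w) (free^~ w)).1).
Proof.
move=> ma mS mfr.
have mC : forall s, mf (fun w => Num.max (a w) (free s w) + S s w).
  by move=> s; apply: madd => //; apply: mmax.
rewrite /=; apply: mmin => //.
apply: mbig; [exact: mmin | exact: mC | move=> g].
apply: mbig; [exact: mmax | exact: ma | exact: mC].
Qed.

Lemma mstep2 (si : 'I_n) (g' : 'I_t -> {set 'I_n}) (a : T -> R) (S free : 'I_n -> T -> R) :
  mf a -> (forall s, mf (S s)) -> (forall s, mf (free s)) ->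
  forall s, mf (fun w => (fj_step si g' (a w) (S^~ w) (free^~ w)).2 s).
Proof.
move=> ma mS mfr s.
have mC : forall s, mf (fun w => Num.max (a w) (free s w) + S s w).
  by move=> s'; apply: madd => //; apply: mmax.
have mD := mstep1 si g' a S free ma mS mfr.
rewrite /=; case: (_ || _) => //.
apply: measurable_fun_ifT => //.
  by apply: measurable_fun_ler => //; apply: mmax.
exact: mmin.
Qed.
End Meas.
Section Det.
Context {R : realType} (n t : nat).

Lemma min2 (x1 x2 y1 y2 : R) : x1 <= y1 -> x2 <= y2 -> Num.min x1 x2 <= Num.min y1 y2.
Proof. by move=> h1 h2; rewrite le_min !ge_min h1 h2 orbT. Qed.
Lemma max2 (x1 x2 y1 y2 : R) : x1 <= y1 -> x2 <= y2 -> Num.max x1 x2 <= Num.max y1 y2.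
Proof. by move=> h1 h2; rewrite ge_max !le_max h1 h2 orbT. Qed.
Lemma minge (z x y : R) : z <= x -> z <= y -> z <= Num.min x y.
Proof. by move=> h1 h2; rewrite le_min h1 h2. Qed.
Lemma maxge (z x y : R) : z <= x -> z <= Num.max x y.
Proof. by move=> h1; rewrite le_max h1. Qed.
Lemma minle (z x y : R) : x <= z -> Num.min x y <= z.
Proof. by move=> h1; rewrite ge_min h1. Qed.
Lemma minle' (z x y : R) : y <= z -> Num.min x y <= z.
Proof. by move=> h1; rewrite ge_min h1 orbT. Qed.

Lemma step_D_le (si : 'I_n) (g' : 'I_t -> {set 'I_n}) (a st : R) (S free : 'I_n -> R) :
  a <= st -> (forall s, free s <= st) ->
  (fj_step si g' a S free).1 <= (fj_step si g' st S (fun _ => st)).1.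
Proof.
move=> ha hf.
have hC : forall s, Num.max a (free s) + S s <= Num.max st st + S s.
  by move=> s; rewrite lerD2r maxxx ge_max ha hf.
apply: min2; first exact: hC.
apply: (big_ind2 (fun x y => x <= y)); first exact: hC.
  by move=> *; apply: min2.
move=> g _; apply: (big_ind2 (fun x y => x <= y)) => //.
  by move=> *; apply: max2.
Qed.

Lemma step_D_ge (si : 'I_n) (g' : 'I_t -> {set 'I_n}) (st : R) (S : 'I_n -> R) :
  (forall s, 0 <= S s) ->
  st <= (fj_step si g' st S (fun _ => st)).1.
Proof.
move=> hS.
have hC : forall s, st <= Num.max st st + S s.
  by move=> s; rewrite maxxx lerDl.
apply: minge; first exact: hC.
apply: (big_ind (fun x => st <= x)); first exact: hC.
  by move=> *; apply: minge.
move=> g _; apply: (big_ind (fun x => st <= x)) => //.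
  by move=> *; apply: maxge.
Qed.

Lemma step_free_le (si : 'I_n) (g' : 'I_t -> {set 'I_n}) (a st : R) (S free : 'I_n -> R) :
  a <= st -> (forall s, free s <= st) -> (forall s, 0 <= S s) ->
  forall s, (fj_step si g' a S free).2 s <= (fj_step si g' st S (fun _ => st)).1.
Proof.
move=> ha hf hS s.
have h1 := @step_D_le si g' a st S free ha hf.
have h2 := @step_D_ge si g' st S hS.
rewrite /=; case: ifP => _; last exact: le_trans (hf s) h2.
case: ifP => _; first exact: le_trans (hf s) h2.
by apply: minle'; exact: h1.
Qed.
End Det.

Section Det2.
Context {R : realType} (n k t : nat) (hkn : (k <= n)%N)
  (grp : 'I_k -> 'I_t -> {set 'I_n})
  (A : nat -> R) (file : nat -> 'I_k) (S : nat -> 'I_n -> R).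

Definition sm_prev (j : nat) : R :=
  match j with 0 => 0 | j'.+1 => sm_departure hkn grp A file S j' end.

Lemma sm_departureE j : sm_departure hkn grp A file S j =
  (fj_step (widen_ord hkn (file j)) (grp (file j)) (Num.max (A j) (sm_prev j)) (S j)
     (fun _ => Num.max (A j) (sm_prev j))).1.
Proof. by case: j. Qed.

Lemma free_inv j : (forall i s, (i < j)%N -> 0 <= S i s) ->
  forall s, fj_free hkn grp A file S j s <= sm_prev j.
Proof.
elim: j => [|j IH] hS s /=; first by [].
rewrite sm_departureE.
apply: step_free_le.
- by rewrite le_max lexx.
- move=> s'; apply: le_trans (IH _ s') _.
    by move=> i s'' hi; apply: hS; apply: ltnW.
  by rewrite le_max lexx orbT.
- by move=> s'; apply: hS.
Qed.

Lemma dep_le j : (forall i s, (i <= j)%N -> 0 <= S i s) ->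
  fj_departure hkn grp A file S j <= sm_departure hkn grp A file S j.
Proof.
move=> hS; rewrite sm_departureE /fj_departure /req_step.
apply: step_D_le; first by rewrite le_max lexx.
move=> s; apply: le_trans (@free_inv j _ s) _.
  by move=> i s' hi; apply: hS; apply: ltnW.
by rewrite le_max lexx orbT.
Qed.
End Det2.
Arguments sm_prev {R n k t} hkn grp A file S j.
Arguments sm_departureE {R n k t} hkn grp A file S j.
Arguments dep_le {R n k t} hkn grp A file S j.

Section Sys.
Context {d : measure_display} {T : measurableType d} {R : realType}.
Notation mf f := (measurable_fun [set: T] (f : T -> R)).
Context (n k t : nat) (hkn : (k <= n)%N) (grp : 'I_k -> 'I_t -> {set 'I_n})
  (Av : T -> nat -> R) (Chf : nat -> T -> 'I_k) (Sv : nat -> 'I_n -> T -> R)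
  (mAv : forall j, mf (fun w => Av w j))
  (mCh : forall j i, measurable [set w | Chf j w = i])
  (mS : forall j s, mf (Sv j s)).

Lemma mfree j s : mf (fun w => fj_free hkn grp (Av w) (Chf^~ w) (fun j s => Sv j s w) j s).
Proof.
elim: j s => [|j IH] s; first exact: measurable_cst.
apply: (@mchoice _ _ _ _ (Chf j) (fun i w => (fj_step (widen_ord hkn i) (grp i) (Av w j)
   (fun s => Sv j s w) (fun s => fj_free hkn grp (Av w) (Chf^~ w) (fun j s => Sv j s w) j s)).2 s)) => // i.
by apply: mstep2.
Qed.

Lemma mdep j : mf (fun w => fj_departure hkn grp (Av w) (Chf^~ w) (fun j s => Sv j s w) j).
Proof.
apply: (@mchoice _ _ _ _ (Chf j) (fun i w => (fj_step (widen_ord hkn i) (grp i) (Av w j)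
   (fun s => Sv j s w) (fun s => fj_free hkn grp (Av w) (Chf^~ w) (fun j s => Sv j s w) j s)).1)) => // i.
by apply: mstep1 => // s; apply: mfree.
Qed.

Lemma msm j : mf (fun w => sm_departure hkn grp (Av w) (Chf^~ w) (fun j s => Sv j s w) j).
Proof.
suff hp : forall j, mf (fun w => sm_prev hkn grp (Av w) (Chf^~ w) (fun j s => Sv j s w) j).
  under eq_fun do rewrite sm_departureE.
  apply: (@mchoice _ _ _ _ (Chf j) (fun i w => (fj_step (widen_ord hkn i) (grp i)
     (Num.max (Av w j) (sm_prev hkn grp (Av w) (Chf^~ w) (fun j s => Sv j s w) j))
   (fun s => Sv j s w) (fun _ => (Num.max (Av w j) (sm_prev hkn grp (Av w) (Chf^~ w) (fun j s => Sv j s w) j)))).1)) => // i.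
  by apply: mstep1 => // [|s]; apply: mmax.
elim=> [|j' IH]; first exact: measurable_cst.
rewrite /=; under eq_fun do rewrite sm_departureE.
apply: (@mchoice _ _ _ _ (Chf j') (fun i w => (fj_step (widen_ord hkn i) (grp i)
     (Num.max (Av w j') (sm_prev hkn grp (Av w) (Chf^~ w) (fun j s => Sv j s w) j'))
   (fun s => Sv j' s w) (fun _ => (Num.max (Av w j') (sm_prev hkn grp (Av w) (Chf^~ w) (fun j s => Sv j s w) j')))).1)) => // i.
by apply: mstep1 => // [|s]; apply: mmax.
Qed.
End Sys.
Definition Role (t r : nat) := option ('I_t * 'I_r).

Section Roles.
Context {R : realType} (n k t r : nat) (hkn : (k <= n)%N)
  (grp : 'I_k -> 'I_t -> {set 'I_n}).

Definition erole (i : 'I_k) (rho : Role t r) : 'I_n :=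
  match rho with
  | None => widen_ord hkn i
  | Some (g, q) => nth (widen_ord hkn i) (enum (grp i g)) q
  end.

Definition phi (st : R) (v : Role t r -> R) : R :=
  Num.min (st + v None)
    (\big[Num.min/(st + v None)]_(g < t) \big[Num.max/st]_(q < r) (st + v (Some (g, q)))).

Lemma bigset_nth (op : SemiGroup.com_law R) (idx : R) (A : {set 'I_n}) (x0 : 'I_n) (F : 'I_n -> R) :
  #|A| = r ->
  \big[op/idx]_(s in A) F s = \big[op/idx]_(q < r) F (nth x0 (enum A) q).
Proof.
move=> hA; rewrite -(big_enum op idx A F).
rewrite -{1}(mkseq_nth x0 (enum A)) /mkseq big_map -cardE hA.
by rewrite -(big_mkord xpredT (fun q => F (nth x0 (enum A) q))) /index_iota subn0.
Qed.

Lemma phiE (i : 'I_k) (st : R) (S : 'I_n -> R) :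
  (forall g, #|grp i g| = r) ->
  (fj_step (widen_ord hkn i) (grp i) st S (fun _ => st)).1 = phi st (fun rho => S (erole i rho)).
Proof.
move=> hc; rewrite /= /phi maxxx; congr Num.min.
apply: eq_bigr => g _.
by rewrite (bigset_nth Num.max st (grp i g) (widen_ord hkn i)) //.
Qed.

Fixpoint smr (A : nat -> R) (v : nat -> Role t r -> R) (j : nat) : R :=
  let prev := match j with 0 => 0 | j'.+1 => smr A v j' end in
  phi (Num.max (A j) prev) (v j).

Lemma sm_smr (A : nat -> R) (file : nat -> 'I_k) (S : nat -> 'I_n -> R) :
  (forall i g, #|grp i g| = r) ->
  forall j, sm_departure hkn grp A file S j = smr A (fun l rho => S l (erole (file l) rho)) j.
Proof.
move=> hc; elim=> [|j IH].
  by rewrite /= -phiE.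
by rewrite /= -IH -phiE.
Qed.

Lemma smr_ext (A1 A2 : nat -> R) (v1 v2 : nat -> Role t r -> R) J :
  (forall l, (l <= J)%N -> A1 l = A2 l) -> (forall l rho, (l <= J)%N -> v1 l rho = v2 l rho) ->
  smr A1 v1 J = smr A2 v2 J.
Proof.
elim: J => [|J IH] hA hv.
  rewrite /= hA // (_ : v1 0%N = v2 0%N) //; apply: funext => rho; exact: hv.
rewrite /= hA // IH; last 2 first.
- by move=> l hl; apply: hA; apply: leq_trans hl (leqnSn _).
- by move=> l rho hl; apply: hv; apply: leq_trans hl (leqnSn _).
by rewrite (_ : v1 J.+1 = v2 J.+1) //; apply: funext => rho; exact: hv.
Qed.

Lemma erole_inj (i : 'I_k) :
  (forall g, #|grp i g| = r) ->
  (forall g1 g2, g1 != g2 -> (grp i g1 :&: grp i g2 = finset.set0)%SET) ->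
  (forall g, widen_ord hkn i \notin grp i g) ->
  injective (erole i).
Proof.
move=> hc hd hn.
have mem_nth : forall g (q : 'I_r), nth (widen_ord hkn i) (enum (grp i g)) q \in grp i g.
  move=> g q; rewrite -mem_enum mem_nth // -cardE hc; exact: ltn_ord.
case=> [[g1 q1]|] [[g2 q2]|] //=.
- move=> e.
  have [eg|ng] := eqVneq g1 g2.
    subst g2; congr (Some (_, _)); apply: val_inj => /=.
    move: e; move/eqP; rewrite nth_uniq ?enum_uniq // -?cardE ?hc ?ltn_ord //.
    by move/eqP.
  have := hd _ _ ng; move/setP => /(_ (nth (widen_ord hkn i) (enum (grp i g1)) q1)).
  by rewrite !inE mem_nth e mem_nth.
- by move=> e; have := mem_nth g1 q1; rewrite e (negbTE (hn g1)).
- by move=> e; have := mem_nth g2 q2; rewrite -e (negbTE (hn g2)).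
Qed.
End Roles.
Section L1.
Context {d : measure_display} {T : measurableType d} {R : realType} (P : probability T R)
  (K : finType).

Definition tup (U : K -> T -> R) (w : T) : #|K|.-tuple R := [tuple U (enum_val i) w | i < #|K|].

Lemma mtup (U : K -> T -> R) : (forall x, measurable_fun setT (U x)) ->
  measurable_fun setT (tup U).
Proof.
move=> mU; apply/measurable_fun_tnthP => i.
rewrite (_ : _ \o _ = U (enum_val i)) //; apply: funext => w /=.
by rewrite tnth_mktuple.
Qed.

Definition rectT (B : 'I_#|K| -> set R) : set (#|K|.-tuple R) :=
  [set z | forall i, B i (tnth z i)].

Lemma rectT_meas (B : 'I_#|K| -> set R) : (forall i, measurable (B i)) ->
  measurable (rectT B).
Proof.
move=> mB.
have key : forall l : seq 'I_#|K|,
    measurable [set z : #|K|.-tuple R | forall i, i \in l -> B i (tnth z i)].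
  elim=> [|i l IH].
    by rewrite (_ : [set z | _] = setT) //; apply/seteqP; split => z //= _ i.
  rewrite (_ : [set z | _] = ((fun z : #|K|.-tuple R => tnth z i) @^-1` B i) `&` [set z | forall i, i \in l -> B i (tnth z i)]).
    apply: measurableI => //.
    by have := measurable_tnth i measurableT (mB i); rewrite setTI.
  apply/seteqP; split => z /=.
    move=> h; split; first by apply: h; rewrite in_cons eqxx.
    by move=> j hj; apply: h; rewrite in_cons hj orbT.
  move=> [h1 h2] j; rewrite in_cons => /orP[/eqP ->|]//; exact: h2.
rewrite (_ : rectT B = [set z | forall i, i \in enum 'I_#|K| -> B i (tnth z i)]) //.
by apply/seteqP; split => z /= h i //; apply: h; rewrite mem_enum.
Qed.

Definition GR : set (set (#|K|.-tuple R)) :=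
  [set A | exists B : 'I_#|K| -> set R, (forall i, measurable (B i)) /\ A = rectT B].

Lemma GR_gen : measurable = <<s GR >>.
Proof.
apply/seteqP; split.
- move=> A mA; apply: (smallest_sub _ _ mA); first exact: smallest_sigma_algebra.
  move=> X; rewrite -bigcup_seq => -[i _ [Y mY <-]]; apply: sub_sigma_algebra.
  exists (fun j => if j == i then Y else setT); split.
    by move=> j; case: ifP.
  apply/seteqP; split => z /=.
    by move=> [_ hY] j; case: ifP => // /eqP ->.
  by move=> h; split => //; have := h i; rewrite eqxx.
- apply: smallest_sub; first exact: sigma_algebra_measurable.
  by move=> A [B [mB ->]]; exact: rectT_meas.
Qed.

Lemma tup_rect (U : K -> T -> R) (B : 'I_#|K| -> set R) :
  tup U @^-1` rectT B = [set w | forall x, B (enum_rank x) (U x w)].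
Proof.
apply/seteqP; split => w /=.
  by move=> h x; have := h (enum_rank x); rewrite tnth_mktuple enum_rankK.
by move=> h i; rewrite tnth_mktuple -{1}(enum_valK i); apply: h.
Qed.

Lemma L1 (U V : K -> T -> R) (E : set T) (mE : measurable E)
  (mU : forall x, measurable_fun setT (U x)) (mV : forall x, measurable_fun setT (V x)) :
  (forall B : K -> set R, (forall x, measurable (B x)) ->
    P ([set w | forall x, B x (U x w)] `&` E) = P ([set w | forall x, B x (V x w)] `&` E)) ->
  forall A, measurable A -> P (tup U @^-1` A `&` E) = P (tup V @^-1` A `&` E).
Proof.
move=> h A mA.
have mtU := @mtup U mU; have mtV := @mtup V mV.
pose m1 : {measure set _ -> \bar R} := pushforward (mrestr P mE) (tup U).
pose m2 : {measure set _ -> \bar R} := pushforward (mrestr P mE) (tup V).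
have := measure_unique GR (fun _ => setT) GR_gen _ _ _ (m1 mtU) (m2 mtV) _ _ A mA.
rewrite /m1 /m2 /pushforward /mrestr /=; apply.
- move=> X Y [B1 [mB1 ->]] [B2 [mB2 ->]]; exists (fun i => B1 i `&` B2 i); split.
    by move=> i; exact: measurableI.
  by apply/seteqP; split => z /=; [move=> [h1 h2] i; split | move=> h1; split => i; case: (h1 i)].
- by move=> _; exists (fun _ => setT); split => //; apply/seteqP; split.
- by apply/seteqP; split => // z _; exists 0%N.
- move=> X [B [mB ->]]; rewrite /= /pushforward /mrestr !tup_rect.
  exact: (h (fun x => B (enum_rank x)) (fun x => mB _)).
- move=> _; rewrite /= /pushforward /mrestr preimage_setT setTI.
  by apply: (le_lt_trans (probability_le1 P mE)); exact: ltry.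
Qed.
End L1.
Lemma indep_prod {d : measure_display} {T : measurableType d} {R : realType} (P : probability T R)
  (n k : nat) (X : nat -> T -> R) (Sv : nat -> 'I_n -> T -> R) (Ch : nat -> T -> 'I_k)
  (indep : mutually_independent P (prim_rv X Sv Ch))
  (K' : finType) (tau : K' -> prim_idx n) (htau : injective tau)
  (B : K' -> set R) (mB : forall x, measurable (B x)) :
  P [set w | forall x, B x (prim_rv X Sv Ch (tau x) w)] =
  (\prod_(x : K') fine (P (prim_rv X Sv Ch (tau x) @^-1` B x)))%:E.
Proof.
pose B2 (q : prim_idx n) : set R := if [pick x | tau x == q] is Some x then B x else setT.
have hB2 : forall x, B2 (tau x) = B x.
  move=> x; rewrite /B2; case: pickP => [y /eqP /htau -> //|/(_ x)].
  by rewrite eqxx.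
have mB2 : forall q, measurable (B2 q).
  by move=> q; rewrite /B2; case: pickP.
have uq : uniq (map tau (enum K')) by rewrite map_inj_uniq ?enum_uniq.
have := indep (map tau (enum K')) B2 uq mB2.
rewrite big_map.
have -> : \prod_(i <- enum K') fine (P (prim_rv X Sv Ch (tau i) @^-1` B2 (tau i))) =
          \prod_(x : K') fine (P (prim_rv X Sv Ch (tau x) @^-1` B x)).
  by rewrite big_enum /=; apply: eq_bigr => x _; rewrite hB2.
move=> <-; congr (P _); apply/seteqP; split => w /=.
  move=> h q /= /mapP [x _ ->]; rewrite /preimage /= hB2; exact: h.
move=> h x; rewrite -hB2; apply: (h (tau x)) => /=.
by apply: map_f; rewrite mem_enum.
Qed.
Arguments smr {R t r}.
Arguments phi {R t r}.
Arguments erole {n k t r}.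

Section E1.
Context {d : measure_display} {T : measurableType d} {R : realType}.
Notation mf f := (measurable_fun [set: T] (f : T -> R)).

Lemma msmr (t r : nat) (A' : T -> nat -> R) (v' : T -> nat -> Role t r -> R) :
  (forall l, mf (A'^~ l)) -> (forall l rho, mf (fun w => v' w l rho)) ->
  forall j, mf (fun w => smr (A' w) (v' w) j).
Proof.
move=> mA mv.
have mphi : forall (st : T -> R) l, mf st -> mf (fun w => phi (st w) (v' w l)).
  move=> st l mst; rewrite /phi; apply: mmin; first exact: madd.
  apply: mbig; [exact: mmin | exact: madd | move=> g].
  apply: mbig; [exact: mmax | exact: mst | move=> q; exact: madd].
elim=> [|j IH] /=.
  by apply: mphi; apply: mmax => //; exact: measurable_cst.
by apply: mphi; apply: mmax.
Qed.

Lemma mset_gt (x : R) (f : T -> R) : mf f -> measurable [set w | x < f w].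
Proof.
move=> mfn; have := mfn measurableT (`]x, +oo[%classic) (measurable_itv _).
rewrite setTI; congr measurable; apply/seteqP; split => w /=; by rewrite in_itv /= andbT.
Qed.

Lemma meas_forall (I : finType) (F : I -> set T) : (forall i, measurable (F i)) ->
  measurable [set w | forall i, F i w].
Proof.
move=> mF.
have key : forall l : seq I, measurable [set w | forall i, i \in l -> F i w].
  elim=> [|i l IH].
    by rewrite (_ : [set w | _] = setT) //; apply/seteqP; split => w //= _ i.
  rewrite (_ : [set w | _] = F i `&` [set w | forall i, i \in l -> F i w]).
    exact: measurableI.
  apply/seteqP; split => w /=.
    move=> h; split; first by apply: h; rewrite in_cons eqxx.
    by move=> j hj; apply: h; rewrite in_cons hj orbT.
  move=> [h1 h2] j; rewrite in_cons => /orP[/eqP ->|]//; exact: h2.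
rewrite (_ : [set w | _] = [set w | forall i, i \in enum I -> F i w]) //.
by apply/seteqP; split => w /= h i //; apply: h; rewrite mem_enum.
Qed.
End E1.

Section E2.
Context {d : measure_display} {T : measurableType d} {R : realType} (P : probability T R).

Lemma P_le (E1 E2 N : set T) : measurable E1 -> measurable E2 -> P.-negligible N ->
  E1 `<=` E2 `|` N -> fine (P E1) <= fine (P E2).
Proof.
move=> m1 m2 [M [mM PM NM]] sub.
apply: fine_le; rewrite ?fin_num_measure //.
apply: (le_trans (le_measure P _ _ (_ : E1 `<=` E2 `|` M))).
- by rewrite inE.
- by rewrite inE; exact: measurableU.
- by move=> w /sub [|/NM]; [left|right].
apply: (le_trans (measureU2 P m2 mM)).
by rewrite [X in (_ + X)%E](_ : _ = 0%E) ?adde0.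
Qed.

Lemma part_sum (I : finType) (f : T -> I) (A : set T) :
  (forall i, measurable [set w | f w = i]) -> measurable A ->
  P A = (\sum_(i : I) P (A `&` [set w | f w = i]))%E.
Proof.
move=> mf mA.
have key : forall s : seq I, uniq s ->
    P (A `&` [set w | f w \in s]) = (\sum_(i <- s) P (A `&` [set w | f w = i]))%E.
  elim=> [|i s IH] /=.
    by move=> _; rewrite big_nil (_ : _ `&` _ = set0) ?measure0 //; apply/seteqP; split => w // [].
  move=> /andP[ni us]; rewrite big_cons -IH //.
  have mS : forall s' : seq I, measurable (A `&` [set w | f w \in s']).
    move=> s'; apply: measurableI => //.
    rewrite (_ : [set w | _] = \big[setU/set0]_(j <- s') [set w | f w = j]).
      by apply: bigsetU_measurable => j _.
    elim: s' => [|j s' IH'].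
      by rewrite big_nil; apply/seteqP; split => w.
    rewrite big_cons -IH'; apply/seteqP; split => w /=; rewrite in_cons.
      by move=> /orP[/eqP ->|h]; [left|right].
    by move=> [->|h]; rewrite ?eqxx // h orbT.
  rewrite -measureU //; last 2 first.
  - exact: measurableI.
  - apply/seteqP; split => w // [[_ e] [_ /= h]]; rewrite e in h; by rewrite h in ni.
  congr (P _); apply/seteqP; split => w /=.
    by move=> [hA]; rewrite in_cons => /orP[/eqP h|h]; [left|right].
  by move=> [[hA ->]|[hA h]]; split => //; rewrite in_cons ?eqxx ?h ?orbT.
rewrite -big_enum /= -key ?enum_uniq //.
congr (P _); apply/seteqP; split => w /=; last by case.
by move=> hA; split => //; rewrite mem_enum.
Qed.
End E2.
Arguments tup {d T R K}.

Section F.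
Context {R : realType} {d : measure_display} {T : measurableType d} (P : probability T R)
  (n k t r : nat) (hkn : (k <= n)%N) (grp : 'I_k -> 'I_t -> {set 'I_n})
  (hcard : forall i g, #|grp i g| = r)
  (einj : forall i, injective (@erole n k t r hkn grp i))
  (mu : R)
  (X : nat -> T -> R) (Sv : nat -> 'I_n -> T -> R) (Ch : nat -> T -> 'I_k)
  (mX : forall j, measurable_fun setT (X j))
  (mS : forall j s, measurable_fun setT (Sv j s))
  (mCh : forall j i, measurable [set w | Ch j w = i])
  (dS : forall j s A, measurable A -> P (Sv j s @^-1` A) = exponential_prob mu A)
  (indep : mutually_independent P (prim_rv X Sv Ch)).

Lemma negl_neg : P.-negligible [set w | exists j s, Sv j s w < 0].
Proof.
have mlt : forall j s, measurable [set w | Sv j s w < 0].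
  move=> j s; have := mS j s measurableT (`]-oo, 0[%classic) (measurable_itv _).
  rewrite setTI; congr measurable; apply/seteqP; split => w /=; by rewrite in_itv.
have h1 : forall j s, P [set w | Sv j s w < 0] = 0%E.
  move=> j s.
  have -> : [set w | Sv j s w < 0] = Sv j s @^-1` `]-oo, 0[.
    by apply/seteqP; split => w /=; rewrite in_itv.
  rewrite dS; last exact: measurable_itv.
  rewrite /exponential_prob; apply: integral0_eq => y /=; rewrite in_itv /= => hy.
  by rewrite lt0_exponential_pdf.
have h2 : forall j (l : seq 'I_n), P.-negligible [set w | exists s, s \in l /\ Sv j s w < 0].
  move=> j; elim=> [|s l IH].
    apply: (negligibleS _ (negligible_set0 P)) => w /= [s []].
    by rewrite in_nil.
  apply: (negligibleS _ (negligibleU (proj2 (negligibleP _ (mlt j s)) (h1 j s)) IH)).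
  move=> w /= [s' []]; rewrite in_cons => /orP[/eqP -> h|hl h]; first by left.
  by right; exists s'.
apply: (negligibleS _ (negligible_bigcup (fun j => h2 j (enum 'I_n)))).
by move=> w [j [s h]]; exists j => //; exists s; rewrite mem_enum.
Qed.

Lemma mconst_set (Q : Prop) : measurable [set _ : T | Q].
Proof.
case: (pselect Q) => hQ.
  by rewrite (_ : [set _ | Q] = setT) //; apply/seteqP; split.
by rewrite (_ : [set _ | Q] = set0) //; apply/seteqP; split.
Qed.

Lemma marr j : measurable_fun setT (fun w => arrivals X w j).
Proof.
rewrite /arrivals; apply: mbig; [exact: madd | exact: measurable_cst | exact: mX].
Qed.

Variables (x : R) (J : nat) (i0 : 'I_k).

Let K : finType := ('I_J.+1 + 'I_J.+1 * Role t r)%type.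
Let C : finType := {ffun 'I_J.+1 -> 'I_k}.
Let sig (c : C) (y : K) : prim_idx n :=
  match y with
  | inl l => inl (inl (nat_of_ord l))
  | inr (l, rho) => inl (inr (nat_of_ord l, erole hkn grp (c l) rho))
  end.
Let U (c : C) (y : K) := prim_rv X Sv Ch (sig c y).
Let c0 : C := [ffun _ => i0].
Let Ec (c : C) := [set w | [ffun l => Ch (nat_of_ord l) w] = c].
Let Xc (z : #|K|.-tuple R) (l : nat) : R :=
  if (l < J.+1)%N then tnth z (enum_rank (inl (inord l) : K)) else 0.
Let arr (z : #|K|.-tuple R) (l : nat) : R := \sum_(l' < l.+1) Xc z l'.
Let vz (z : #|K|.-tuple R) (l : nat) (rho : Role t r) : R :=
  tnth z (enum_rank (inr (inord l, rho) : K)).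
Let H := [set z : #|K|.-tuple R | x < smr (arr z) (vz z) J - arr z J].

Let mU c y : measurable_fun setT (U c y).
Proof. by case: y => [l|[l rho]]; rewrite /U /=. Qed.

Let mH : measurable H.
Proof.
apply: mset_gt; apply: measurable_funB; last first.
  rewrite /arr; apply: mbig; [exact: madd | exact: measurable_cst | move=> l'].
  rewrite /Xc; case: (l' < J.+1)%N; [exact: measurable_tnth | exact: measurable_cst].
apply: msmr => [l|l rho]; last exact: measurable_tnth.
rewrite /arr; apply: mbig; [exact: madd | exact: measurable_cst | move=> l'].
rewrite /Xc; case: (l' < J.+1)%N; [exact: measurable_tnth | exact: measurable_cst].
Qed.

Let tupE (c : C) w y : tnth (tup (U c) w) (enum_rank y) = U c y w.
Proof. by rewrite tnth_mktuple enum_rankK. Qed.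

Let arrE (c : C) w l : (l <= J)%N -> arr (tup (U c) w) l = arrivals X w l.
Proof.
move=> hl; rewrite /arr /arrivals; apply: eq_bigr => l' _.
have hl' : (l' < J.+1)%N by apply: leq_trans (ltn_ord l') _; rewrite ltnS.
by rewrite /Xc hl' tupE /U /= inordK.
Qed.

Let vzE (c : C) w l rho : (l <= J)%N -> vz (tup (U c) w) l rho = Sv l (erole hkn grp (c (inord l)) rho) w.
Proof. by move=> hl; rewrite /vz tupE /U /= inordK. Qed.

Let smE (c : C) w (file : nat -> 'I_k) : (forall l, (l <= J)%N -> file l = c (inord l)) ->
  smr (arr (tup (U c) w)) (vz (tup (U c) w)) J - arr (tup (U c) w) J =
  sm_departure hkn grp (arrivals X w) file (fun j s => Sv j s w) J - arrivals X w J.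
Proof.
move=> hf; rewrite (@sm_smr R n k t r hkn grp _ _ _ hcard) arrE //; congr (_ - _).
by apply: smr_ext => [l hl | l rho hl]; [exact: arrE | rewrite vzE //= hf].
Qed.


Let rect_prod (c' c : C) (B : K -> set R) (mB : forall y, measurable (B y)) :
  P ([set w | forall y, B y (U c' y w)] `&` Ec c) =
  ((\prod_(y : K) fine (P (U c' y @^-1` B y))) *
   \prod_(l : 'I_J.+1) fine (P (prim_rv X Sv Ch (inr (nat_of_ord l)) @^-1` [set ((c l : nat)%:R : R)])))%:E.
Proof.
pose tau (y : (K + 'I_J.+1)%type) : prim_idx n :=
  match y with inl y => sig c' y | inr l => inr (nat_of_ord l) end.
pose B' (y : (K + 'I_J.+1)%type) : set R :=
  match y with inl y => B y | inr l => [set ((c l : nat)%:R : R)] end.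
have htau : injective tau.
  case=> [[l1|[l1 r1]]|l1] [[l2|[l2 r2]]|l2] //= e; case: e.
  - by move=> e; congr (inl (inl _)); apply: val_inj.
  - move=> e1; have e1' : l1 = l2 by apply: val_inj.
    subst l2 => /einj ->; by [].
  - by move=> e; congr inr; apply: val_inj.
have mB' : forall y, measurable (B' y) by case=> [y|l] /=; [exact: mB | exact: measurable_set1].
have := indep_prod P n k X Sv Ch indep _ tau htau B' mB'.
rewrite big_sumType /= => <-.
congr (P _); apply/seteqP; split => w /=.
  move=> [h hE] [y|l] /=; first exact: h.
  by rewrite -hE ffunE.
move=> h; split; first by move=> y; exact: (h (inl y)).
apply/ffunP => l; rewrite ffunE; have /= e := h (inr l).
by apply: val_inj; apply/eqP; rewrite -(eqr_nat R); apply/eqP.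
Qed.

Lemma dist_eq :
  P [set w | x < sm_departure hkn grp (arrivals X w) (fun _ => i0) (fun j s => Sv j s w) J - arrivals X w J] =
  P [set w | x < sm_departure hkn grp (arrivals X w) (Ch^~ w) (fun j s => Sv j s w) J - arrivals X w J].
Proof.
have mEc : forall c, measurable (Ec c).
  move=> c; rewrite (_ : Ec c = [set w | forall l : 'I_J.+1, Ch l w = c l]).
    by apply: meas_forall => l; exact: mCh.
  apply/seteqP; split => w /=; first by move=> <- l; rewrite ffunE.
  by move=> h; apply/ffunP => l; rewrite ffunE h.
have mpre : forall c, measurable (tup (U c) @^-1` H).
  by move=> c; have := @mtup _ _ _ K (U c) (mU c) measurableT _ mH; rewrite setTI.
have e0 : [set w | x < sm_departure hkn grp (arrivals X w) (fun _ => i0) (fun j s => Sv j s w) J - arrivals X w J] = tup (U c0) @^-1` H.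
  apply/seteqP; split => w /=; rewrite /H /= (smE c0 w (fun _ => i0)) //;
  by move=> l hl; rewrite ffunE.
rewrite e0 (part_sum P C (fun w => [ffun l => Ch (nat_of_ord l) w] : C)) //.
have mSM : measurable [set w | x < sm_departure hkn grp (arrivals X w) (Ch^~ w) (fun j s => Sv j s w) J - arrivals X w J].
  apply: mset_gt; apply: measurable_funB; last exact: marr.
  by apply: msm => //; exact: marr.
rewrite [RHS](part_sum P C (fun w => [ffun l => Ch (nat_of_ord l) w] : C)) //.
apply: eq_bigr => c _.
transitivity (P (tup (U c) @^-1` H `&` Ec c)).
  apply: (L1 P K _ _ _ (mEc c) (mU c0) (mU c)) => // B mB.
  rewrite !rect_prod //; congr ((_ * _)%:E); apply: eq_bigr => -[l|[l rho]] _ //=.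
  by rewrite /U /= !dS.
congr (P _); apply/seteqP; split => w /= [hH hE]; split => //.
  rewrite -(smE c w (Ch^~ w)) //.
  by move=> l hl; rewrite -hE ffunE inordK.
rewrite /H /= (smE c w (Ch^~ w)) //.
by move=> l hl; rewrite -hE ffunE inordK.
Qed.
End F.
Theorem lemma5
  (R : realType) (d : measure_display) (T : measurableType d) (P : probability T R)
  (n k t r : nat) (hkn : (k <= n)%N)
  (F : fieldType) (G : 'M[F]_(k, n)) (grp : 'I_k -> 'I_t -> {set 'I_n})
  (Hcode : systematic_rt_available r hkn G grp)
  (lam mu : R) (hlam : 0 < lam) (hmu : 0 < mu)
  (p : 'I_k -> R) (hp0 : forall i, 0 <= p i) (hp1 : \sum_i p i = 1)
  (X : nat -> T -> R)              (* interarrival times *)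
  (Sv : nat -> 'I_n -> T -> R)     (* service times *)
  (Ch : nat -> T -> 'I_k)          (* object chosen by request j (FJ-GA, FJ-SM) *)
  (mX : forall j, measurable_fun setT (X j))
  (mS : forall j s, measurable_fun setT (Sv j s))
  (mCh : forall j i, measurable [set w | Ch j w = i])
  (dX : forall j A, measurable A -> P (X j @^-1` A) = exponential_prob lam A)
  (dS : forall j s A, measurable A -> P (Sv j s @^-1` A) = exponential_prob mu A)
  (dCh : forall j i, P [set w | Ch j w = i] = (p i)%:E)
  (indep : mutually_independent P (prim_rv X Sv Ch)) :
  forall x : R, 0 <= x ->
    let T_GA j w := fj_departure hkn grp (arrivals X w) (Ch^~ w) (fun j s => Sv j s w) j
                    - arrivals X w j in
    let T_FA i0 j w := fj_departure hkn grp (arrivals X w) (fun _ => i0) (fun j s => Sv j s w) j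
                    - arrivals X w j in
    let T_SM j w := sm_departure hkn grp (arrivals X w) (Ch^~ w) (fun j s => Sv j s w) j
                    - arrivals X w j in
    (forall lGA lSM : R,
       (fun j : nat => fine (P [set w | x < T_GA j w])) @ \oo --> lGA ->
       (fun j : nat => fine (P [set w | x < T_SM j w])) @ \oo --> lSM ->
       lGA <= lSM) /\
    (forall (i0 : 'I_k) (lFA lSM : R),
       (fun j : nat => fine (P [set w | x < T_FA i0 j w])) @ \oo --> lFA ->
       (fun j : nat => fine (P [set w | x < T_SM j w])) @ \oo --> lSM ->
       lFA <= lSM).
Proof.
move=> x hx T_GA T_FA T_SM.
have [_ Hc] := Hcode.
have hcard : forall i g, #|grp i g| = r by move=> i g; case: (Hc i).
have einj : forall i, injective (@erole n k t r hkn grp i).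
  by move=> i; case: (Hc i) => h1 [h2 [h3 _]]; exact: erole_inj.
have hN := negl_neg P n mu Sv mS dS.
have pos : forall w, ~ (exists j s, Sv j s w < 0) -> forall j s, 0 <= Sv j s w.
  move=> w hw j s; rewrite leNgt; apply/negP => h; apply: hw; by exists j, s.
have mA := marr X mX.
have mSM : forall j, measurable [set w | x < T_SM j w].
  move=> j; apply: mset_gt; apply: measurable_funB; last exact: mA.
  by apply: msm => //; exact: mA.
split.
- move=> lGA lSM hGA hSM; apply: (ler_cvg_to hGA hSM); apply: nearW => j.
  apply: (P_le P _ _ _ _ _ hN).
  + apply: mset_gt; apply: measurable_funB; last exact: mA.
    by apply: mdep => //; exact: mA.
  + exact: mSM.
  + move=> w /= hw; case: (pselect (exists j s, Sv j s w < 0)) => hNw; [by right | left].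
    apply: lt_le_trans hw _; rewrite /T_SM lerD2r.
    by apply: dep_le => i s _; exact: pos.
- move=> i0 lFA lSM hFA hSM; apply: (ler_cvg_to hFA hSM); apply: nearW => J.
  have mc : forall (j : nat) i, measurable [set w : T | i0 = i].
    move=> j i; case: (pselect (i0 = i)) => h.
      by rewrite (_ : [set _ | _] = setT) //; apply/seteqP; split.
    by rewrite (_ : [set _ | _] = set0) //; apply/seteqP; split.
  have := dist_eq P n k t r hkn grp hcard einj mu X Sv Ch mX mS mCh dS indep x J i0.
  set E0 := [set w | _ < sm_departure _ _ _ (fun _ => i0) _ _ - _] => e.
  have -> : fine (P [set w | x < T_SM J w]) = fine (P E0) by rewrite e.
  apply: (P_le P _ _ _ _ _ hN).
  + apply: mset_gt; apply: measurable_funB; last exact: mA.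
    by apply: mdep => //; exact: mA.
  + apply: mset_gt; apply: measurable_funB; last exact: mA.
    by apply: msm => //; exact: mA.
  + move=> w /= hw; case: (pselect (exists j s, Sv j s w < 0)) => hNw; [by right | left].
    apply: lt_le_trans hw _; rewrite /T_FA lerD2r.
    by apply: dep_le => i s _; exact: pos.
Qed.
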